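(* If a sequent $\Gamma\Rightarrow\Delta$ is provable in $\mathsf{Grz}_\infty$, then there is a cyclic proof of $\Gamma\Rightarrow\Delta$.
   Context: Formulas are built from $\bot$ and atomic propositions using $\to$ and $\Box$. A sequent is $\Gamma\Rightarrow\Delta$ with $\Gamma,\Delta$ finite multisets of formulas; $\Box\Pi$ denotes $\{\Box B: B\in\Pi\}$ as a multiset. The calculus $\mathsf{Grz}_\infty$ has initial sequents $\Gamma,p\Rightarrow p,\Delta$ ($p$ atomic) and $\Gamma,\bot\Rightarrow\Delta$ and rules: $(\to_L)$ from $\Gamma,B\Rightarrow\Delta$ and $\Gamma\Rightarrow A,\Delta$ infer $\Gamma,A\to B\Rightarrow\Delta$; $(\to_R)$ from $\Gamma,A\Rightarrow B,\Delta$ infer $\Gamma\Rightarrow A\to B,\Delta$; $(\mathsf{refl})$ from $\Gamma,B,\Box B\Rightarrow\Delta$ infer $\Gamma,\Box B\Rightarrow\Delta$; $(\Box)$ from left premise $\Gamma,\Box\Pi\Rightarrow A,\Delta$ and right premise $\Box\Pi\Rightarrow A$ infer $\Gamma,\Box\Pi\Rightarrow\Box A,\Delta$. An $\infty$-proof is a possibly infinite tree of sequents built according to these rules, with leaves labelled by initial sequents, in which every infinite branch passes through a right premise of $(\Box)$ infinitely often; a sequent is provable if it labels the root of an $\infty$-proof. A cyclic proof of $\Gamma\Rightarrow\Delta$ is a pair $(\kappa,d)$ where $\kappa$ is a finite tree of sequents constructed according to the rules of $\mathsf{Grz}_\infty$ with root labelled $\Gamma\Rightarrow\Delta$ (leaves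 need not be initial sequents), and $d$ is a function defined exactly on the leaves of $\kappa$ not labelled by initial sequents such that for each such leaf $a$: $d(a)$ lies on the path from the root of $\kappa$ to $a$; there is a right premise of the rule $(\Box)$ between $a$ and $d(a)$; and $a$ and $d(a)$ are labelled by the same sequent. *)

(* Defs.v *)
From Stdlib Require Import List Permutation Arith.
Import ListNotations.

Inductive fml : Type :=
| Bot : fml
| Atom : nat -> fml
| Imp : fml -> fml -> fml
| Box : fml -> fml.

(** A sequent Gamma => Delta; the lists are read as finite multisets. *)
Definition sequent : Type := (list fml * list fml)%type.

Definition seq_eqv (s s' : sequent) : Prop :=
  Permutation (fst s) (fst s') /\ Permutation (snd s) (snd s').

Definition initial (s : sequent) : Prop :=
  (exists p : nat, In (Atom p) (fst s) /\ In (Atom p) (snd s)) \/ In Bot (fst s).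

Inductive rule : Type := ImpL | ImpR | Refl | BoxR.

Definition nprem (r : option rule) : nat :=
  match r with
  | None => 0
  | Some ImpL => 2
  | Some ImpR => 1
  | Some Refl => 1
  | Some BoxR => 2
  end.

(** [rule_inst r c p] : the conclusion c and the premises p 0, p 1, ...
    form an instance of rule r (up to multiset equality).
    For (Box), premise 0 is the left premise and premise 1 the right one. *)
Definition rule_inst (r : rule) (c : sequent) (p : nat -> sequent) : Prop :=
  match r with
  | ImpL => exists G D A B,
      seq_eqv c (Imp A B :: G, D) /\ seq_eqv (p 0) (B :: G, D)
      /\ seq_eqv (p 1) (G, A :: D)
  | ImpR => exists G D A B,
      seq_eqv c (G, Imp A B :: D) /\ seq_eqv (p 0) (A :: G, B :: D)
  | Refl => exists G D B,
      seq_eqv c (Box B :: G, D) /\ seq_eqv (p 0) (B :: Box B :: G, D)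
  | BoxR => exists G D P A,
      seq_eqv c (G ++ map Box P, Box A :: D)
      /\ seq_eqv (p 0) (G ++ map Box P, A :: D)
      /\ seq_eqv (p 1) (map Box P, [A])
  end.

(** A (possibly infinite) labelled tree: nodes are addresses [list nat]
    (the i-th child of w is w ++ [i]); each node carries a sequent and the
    rule applied there (None for a leaf). *)
Record ptree : Type := {
  lab : list nat -> sequent;
  rl  : list nat -> option rule
}.

Inductive node (t : ptree) : list nat -> Prop :=
| node_root : node t []
| node_child : forall w i, node t w -> i < nprem (rl t w) -> node t (w ++ [i]).

Definition rprem (t : ptree) (v : list nat) : Prop :=
  exists w, v = w ++ [1] /\ rl t w = Some BoxR.

Definition rules_ok (t : ptree) (w : list nat) : Prop :=
  match rl t w with
  | None => True
  | Some r => rule_inst r (lab t w) (fun i => lab t (w ++ [i]))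
  end.

Definition branch_prefix (b : nat -> nat) (n : nat) : list nat := map b (seq 0 n).

Definition inf_proof (t : ptree) (s : sequent) : Prop :=
  seq_eqv (lab t []) s
  /\ (forall w, node t w -> rules_ok t w)
  /\ (forall w, node t w -> rl t w = None -> initial (lab t w))
  /\ (forall b : nat -> nat, (forall n, node t (branch_prefix b n)) ->
        forall n, exists m, n <= m /\ rprem t (branch_prefix b (S m))).

Definition provable (s : sequent) : Prop := exists t, inf_proof t s.

Definition prefix (u v : list nat) : Prop := exists x, v = u ++ x.

(** Cyclic proofs (t, d) of s: t is a finite tree; d assigns to each
    non-initial leaf a companion on its path with the same sequent and a
    right premise of (Box) strictly below the companion and at or above the leaf. *)
Definition cyclic_proof (t : ptree) (d : list nat -> list nat) (s : sequent) : Prop :=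
  seq_eqv (lab t []) s
  /\ (exists N, forall w, node t w -> length w <= N)
  /\ (forall w, node t w -> rules_ok t w)
  /\ (forall a, node t a -> rl t a = None -> ~ initial (lab t a) ->
        prefix (d a) a
        /\ (exists c, prefix (d a) c /\ c <> d a /\ prefix c a /\ rprem t c)
        /\ seq_eqv (lab t (d a)) (lab t a)).

Definition has_cyclic_proof (s : sequent) : Prop :=
  exists t d, cyclic_proof t d s.

(* Main.v *)
Require Import Defs.
From Stdlib Require Import List Permutation Arith Lia Classical ClassicalEpsilon.
Import ListNotations.

Definition fml_dec : forall x y : fml, {x = y} + {x <> y}.
Proof. decide equality; apply Nat.eq_dec. Defined.

Record model := {
  mR : list nat -> list nat -> Prop;
  mV : list nat -> nat -> Prop;
  mrefl : forall x, mR x x;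
  mtrans : forall x y z, mR x y -> mR y z -> mR x z;
  mwf : well_founded (fun y x => mR x y /\ x <> y)
}.

Fixpoint forces (M : model) (x : list nat) (f : fml) : Prop :=
  match f with
  | Bot => False
  | Atom p => mV M x p
  | Imp A B => forces M x A -> forces M x B
  | Box A => forall y, mR M x y -> forces M y A
  end.

Definition refutes M x (s : sequent) : Prop :=
  (forall f, In f (fst s) -> forces M x f) /\ (forall f, In f (snd s) -> ~ forces M x f).

Definition valid (s : sequent) : Prop := forall M x, ~ refutes M x s.

Lemma refutes_eqv M x s s' : seq_eqv s s' -> refutes M x s -> refutes M x s'.
Proof.
  intros [H1 H2] [R1 R2]; split; intros f Hf.
  - apply R1. eapply Permutation_in; [apply Permutation_sym; exact H1| exact Hf].
  - apply R2. eapply Permutation_in; [apply Permutation_sym; exact H2| exact Hf].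
Qed.

Lemma refutes_eqv' M x s s' : seq_eqv s' s -> refutes M x s -> refutes M x s'.
Proof. intros [H1 H2]; apply refutes_eqv; split; apply Permutation_sym; assumption. Qed.

Lemma initial_not_refuted M x s : initial s -> ~ refutes M x s.
Proof.
  intros [[p [H1 H2]] | H] [R1 R2].
  - apply (R2 _ H2). apply (R1 _ H1).
  - apply (R1 _ H).
Qed.

Definition goodstep (t : ptree) M (w x : list nat) (i : nat) (y : list nat) : Prop :=
  i < nprem (rl t w) /\ refutes M y (lab t (w ++ [i])) /\
  ((rl t w = Some BoxR /\ i = 1) -> mR M x y /\ x <> y) /\
  (~ (rl t w = Some BoxR /\ i = 1) -> y = x).

Lemma step_exists t s M w x : inf_proof t s -> node t w -> refutes M x (lab t w) ->
  exists i y, goodstep t M w x i y.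
Proof.
  intros (_ & Hrules & Hleaf & _) Hn Hr. unfold goodstep.
  destruct (rl t w) as [r|] eqn:E.
  2:{ exfalso. exact (initial_not_refuted M x _ (Hleaf w Hn E) Hr). }
  pose proof (Hrules w Hn) as Hok. unfold rules_ok in Hok. rewrite E in Hok.
  destruct r; simpl in Hok.
  - destruct Hok as (G & D & A & B & Hc & H0 & H1).
    apply (refutes_eqv _ _ _ _ Hc) in Hr. destruct Hr as [R1 R2].
    assert (HI : forces M x (Imp A B)) by (apply R1; left; reflexivity).
    destruct (classic (forces M x A)) as [HA|HA].
    + exists 0, x. simpl. split; [lia|]. split.
      * apply (refutes_eqv' _ _ _ _ H0). split; simpl.
        -- intros f [<-|Hf]; [apply HI, HA | apply R1; right; exact Hf].
        -- exact R2.
      * split; [intros [Ee _]; discriminate Ee | intros _; reflexivity].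
    + exists 1, x. simpl. split; [lia|]. split.
      * apply (refutes_eqv' _ _ _ _ H1). split; simpl.
        -- intros f Hf. apply R1. right. exact Hf.
        -- intros f [<-|Hf]; [exact HA| apply R2; exact Hf].
      * split; [intros [Ee _]; discriminate Ee | intros _; reflexivity].
  - destruct Hok as (G & D & A & B & Hc & H0).
    apply (refutes_eqv _ _ _ _ Hc) in Hr. destruct Hr as [R1 R2].
    assert (HI : ~ forces M x (Imp A B)) by (apply R2; left; reflexivity).
    simpl in HI.
    exists 0, x. simpl. split; [lia|]. split.
    * apply (refutes_eqv' _ _ _ _ H0). split; simpl.
      -- intros f [<-|Hf]; [apply NNPP; intros HA; apply HI; intros HA'; contradiction | apply R1; exact Hf].
      -- intros f [<-|Hf]; [intros HB; apply HI; intros _; exact HB | apply R2; right; exact Hf].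
    * split; [intros [Ee _]; discriminate Ee | intros _; reflexivity].
  - destruct Hok as (G & D & B & Hc & H0).
    apply (refutes_eqv _ _ _ _ Hc) in Hr. destruct Hr as [R1 R2].
    assert (HB : forces M x (Box B)) by (apply R1; left; reflexivity).
    exists 0, x. simpl. split; [lia|]. split.
    * apply (refutes_eqv' _ _ _ _ H0). split; simpl.
      -- intros f [<-|Hf]; [apply HB, mrefl | apply R1; exact Hf].
      -- exact R2.
    * split; [intros [Ee _]; discriminate Ee | intros _; reflexivity].
  - destruct Hok as (G & D & P & A & Hc & H0 & H1).
    apply (refutes_eqv _ _ _ _ Hc) in Hr. destruct Hr as [R1 R2].
    destruct (classic (forces M x A)) as [HA|HA].
    + assert (HnB : ~ forces M x (Box A)) by (apply R2; left; reflexivity).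
      simpl in HnB. apply not_all_ex_not in HnB as [y Hy].
      apply imply_to_and in Hy as [Hxy HyA].
      exists 1, y. simpl. split; [lia|]. split.
      * apply (refutes_eqv' _ _ _ _ H1). split; simpl.
        -- intros f Hf. apply in_map_iff in Hf as (C & <- & HC). simpl. intros z Hz.
           assert (HBC : forces M x (Box C)) by (apply R1; apply in_app_iff; right; apply in_map; exact HC).
           apply HBC. eapply mtrans; eauto.
        -- intros f [<-|[]]. exact HyA.
      * split; [intros _; split; [exact Hxy| intros ->; contradiction] | intros Hn'; exfalso; apply Hn'; split; reflexivity].
    + exists 0, x. simpl. split; [lia|]. split.
      * apply (refutes_eqv' _ _ _ _ H0). split; simpl.
        -- exact R1.
        -- intros f [<-|Hf]; [exact HA | apply R2; right; exact Hf].
      * split; [intros [_ Ee]; discriminate Ee | intros _; reflexivity].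
Qed.

Fixpoint iter_st (g : list nat * list nat -> nat * list nat) (x0 : list nat) (n : nat) : list nat * list nat :=
  match n with
  | 0 => ([], x0)
  | S n => let st := iter_st g x0 n in (fst st ++ [fst (g st)], snd (g st))
  end.

Lemma branch_prefix_S b n : branch_prefix b (S n) = branch_prefix b n ++ [b n].
Proof. unfold branch_prefix. rewrite seq_S, map_app. reflexivity. Qed.

Lemma sound t s : inf_proof t s -> valid s.
Proof.
  intros Hinf M x0 Hr0.
  pose proof Hinf as (Hroot & Hrules & Hleaf & Hbr).
  assert (Hg : forall st : list nat * list nat, exists p : nat * list nat,
             (node t (fst st) /\ refutes M (snd st) (lab t (fst st))) ->
             goodstep t M (fst st) (snd st) (fst p) (snd p)).
  { intros [w x]. destruct (classic (node t w /\ refutes M x (lab t w))) as [[Hn Hr]|Hn].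
    - destruct (step_exists t s M w x Hinf Hn Hr) as (i & y & Hgd). exists (i, y). intros _. exact Hgd.
    - exists (0, []). intros HI. contradiction. }
  assert (Hch : exists g : list nat * list nat -> nat * list nat, forall st,
             (node t (fst st) /\ refutes M (snd st) (lab t (fst st))) ->
             goodstep t M (fst st) (snd st) (fst (g st)) (snd (g st))).
  { exists (fun st => proj1_sig (constructive_indefinite_description _ (Hg st))).
    intros st. exact (proj2_sig (constructive_indefinite_description _ (Hg st))). }
  destruct Hch as [g Hgs].
  set (b := fun n => fst (g (iter_st g x0 n))).
  assert (Hpre : forall n, fst (iter_st g x0 n) = branch_prefix b n).
  { induction n as [|n IH]; [reflexivity|]. rewrite branch_prefix_S, <- IH. reflexivity. }
  assert (HInv : forall n, node t (fst (iter_st g x0 n)) /\ refutes M (snd (iter_st g x0 n)) (lab t (fst (iter_st g x0 n)))).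
  { induction n as [|n IH].
    - split; simpl; [constructor | ]. apply (refutes_eqv' _ _ _ _ Hroot Hr0).
    - destruct (Hgs _ IH) as (Hi & Hr & _). cbn [iter_st fst snd]. split.
      + apply node_child; [exact (proj1 IH) | exact Hi].
      + exact Hr. }
  assert (Hnodes : forall n, node t (branch_prefix b n)).
  { intros n. rewrite <- Hpre. exact (proj1 (HInv n)). }
  assert (Hrp : forall n, rprem t (branch_prefix b (S n)) -> rl t (fst (iter_st g x0 n)) = Some BoxR /\ b n = 1).
  { intros n (w' & Ew & Hw). rewrite branch_prefix_S, <- Hpre in Ew.
    apply app_inj_tail in Ew as [E1 E2]. rewrite E1, E2. split; [exact Hw| reflexivity]. }
  assert (Hstep : forall n, mR M (snd (iter_st g x0 n)) (snd (iter_st g x0 (S n))) /\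
     (rprem t (branch_prefix b (S n)) -> snd (iter_st g x0 n) <> snd (iter_st g x0 (S n)))).
  { intros n. destruct (Hgs _ (HInv n)) as (_ & _ & Hbx & Heq). cbn [iter_st fst snd].
    destruct (classic (rl t (fst (iter_st g x0 n)) = Some BoxR /\ fst (g (iter_st g x0 n)) = 1)) as [Hc|Hc].
    - destruct (Hbx Hc) as [HR Hne]. split; [exact HR | intros _; exact Hne].
    - rewrite (Heq Hc). split; [apply mrefl | intros Hr; exfalso; apply Hc; apply Hrp; exact Hr]. }
  assert (Hreach : forall n k, mR M (snd (iter_st g x0 n)) (snd (iter_st g x0 (n + k)))).
  { intros n k. induction k as [|k IH].
    - rewrite Nat.add_0_r. apply mrefl.
    - rewrite Nat.add_succ_r. eapply mtrans; [exact IH| apply (proj1 (Hstep (n + k)))]. }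
  assert (Hinf' : forall n, exists m, n <= m /\ rprem t (branch_prefix b (S m))) by (apply Hbr; exact Hnodes).
  assert (Hacc : forall x, Acc (fun y x => mR M x y /\ x <> y) x -> forall n, snd (iter_st g x0 n) = x -> False).
  { intros x Hacc. induction Hacc as [x _ IH]. intros n Hn.
    destruct (Hinf' n) as (m & Hnm & Hr).
    destruct (Hstep m) as [HR Hne]. specialize (Hne Hr).
    assert (Hxm : mR M x (snd (iter_st g x0 m))).
    { rewrite <- Hn. replace m with (n + (m - n)) by lia. apply Hreach. }
    destruct (classic (snd (iter_st g x0 (S m)) = x)) as [E|E].
    - apply (IH (snd (iter_st g x0 m))) with (n := m); [|reflexivity].
      split; [exact Hxm| intros E'; apply Hne; rewrite <- E', E; reflexivity].
    - apply (IH (snd (iter_st g x0 (S m)))) with (n := S m); [|reflexivity].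
      split; [eapply mtrans; eauto | intros E'; apply E; symmetry; exact E']. }
  exact (Hacc x0 (mwf M x0) 0 eq_refl).
Qed.

Inductive ftree := FT : sequent -> option rule -> list ftree -> list nat -> ftree.
Definition flab (T : ftree) := match T with FT s _ _ _ => s end.
Definition dummy := FT ([],[]) None [] [].
Definition isRc (r : rule) (i : nat) : bool := match r with BoxR => Nat.eqb i 1 | _ => false end.

Inductive ok : list (sequent * list nat) -> list nat -> bool -> ftree -> Prop :=
| ok_leaf : forall H p b s q,
    (initial s \/ (b = true /\ exists s', In (s', q) H /\ seq_eqv s' s)) ->
    ok H p b (FT s None [] q)
| ok_node : forall H p b s r ch q,
    length ch = nprem (Some r) ->
    rule_inst r s (fun i => flab (nth i ch dummy)) ->
    (forall i, i < length ch -> ok ((s, p) :: H) (p ++ [i]) (isRc r i) (nth i ch dummy)) ->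
    ok H p b (FT s (Some r) ch q).

Fixpoint sub (T : ftree) (w : list nat) : option ftree :=
  match w with
  | [] => Some T
  | i :: w' => match T with FT _ _ ch _ =>
                 match nth_error ch i with Some T' => sub T' w' | None => None end end
  end.

Lemma sub_app T w i : sub T (w ++ [i]) =
  match sub T w with Some (FT _ _ ch _) => nth_error ch i | None => None end.
Proof.
  revert T. induction w as [|j w IH]; intros [s r ch q]; simpl.
  - destruct (nth_error ch i); reflexivity.
  - destruct (nth_error ch j) as [T'|]; [apply IH| reflexivity].
Qed.

Lemma bound_list (n : nat) (P : nat -> nat -> Prop) :
  (forall i N N', N <= N' -> P i N -> P i N') ->
  (forall i, i < n -> exists N, P i N) -> exists N, forall i, i < n -> P i N.
Proof.
  intros Hm; induction n as [|n IH]; intros Hex.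
  - exists 0. intros; lia.
  - destruct IH as [N1 HN1]. { intros i Hi; apply Hex; lia. }
    destruct (Hex n) as [N2 HN2]; [lia|].
    exists (N1 + N2). intros i Hi. destruct (Nat.eq_dec i n) as [->|Hne].
    + eapply Hm; [|eassumption]; lia.
    + eapply Hm; [|apply HN1; lia]; lia.
Qed.

Lemma ok_depth H p b T : ok H p b T -> exists N, forall w, sub T w <> None -> length w <= N.
Proof.
  induction 1 as [H p b s q Hl | H p b s r ch q Hlen Hri Hch IH].
  - exists 0. intros [|i w] Hs; simpl in *; [lia|]. destruct i; simpl in Hs; congruence.
  - destruct (bound_list (length ch) (fun i N => forall w, sub (nth i ch dummy) w <> None -> length w <= N)) as [N HN].
    + intros i N N' HNN' HP w Hw. specialize (HP w Hw). lia.
    + exact IH.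
    + exists (S N). intros [|i w] Hs; simpl; [lia|].
      simpl in Hs. destruct (nth_error ch i) as [T'|] eqn:E; [|congruence].
      assert (Hi : i < length ch) by (apply nth_error_Some; congruence).
      pose proof (HN i Hi w) as X. rewrite (nth_error_nth _ _ dummy E) in X.
      apply le_n_S, X, Hs.
Qed.

Definition tlab (T : ftree) (w : list nat) : sequent :=
  match sub T w with Some (FT s _ _ _) => s | None => ([], []) end.
Definition trl (T : ftree) (w : list nat) : option rule :=
  match sub T w with Some (FT _ r _ _) => r | None => None end.
Definition tree_of (T : ftree) : ptree := {| lab := tlab T; rl := trl T |}.
Definition d_of (T : ftree) (w : list nat) : list nat :=
  match sub T w with Some (FT _ _ _ q) => q | None => [] end.

Lemma reach T0 : ok [] [] false T0 -> forall w, node (tree_of T0) w ->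
  exists H b T, sub T0 w = Some T /\ ok H w b T /\
   (forall s' q, In (s', q) H -> prefix q w /\ length q < length w /\ tlab T0 q = s') /\
   (b = true -> rprem (tree_of T0) w).
Proof.
  intros Hok0 w Hn. induction Hn as [|w i Hn IH Hi].
  - exists [], false, T0. split; [reflexivity|]. split; [exact Hok0|].
    split; [intros ? ? []| discriminate].
  - destruct IH as (H & b & T & Hs & Hok & Hh & Hb).
    simpl in Hi. unfold trl in Hi. rewrite Hs in Hi.
    destruct Hok as [H' p' b' s q Hl | H' p' b' s r ch q Hlen Hri Hch].
    + simpl in Hi. lia.
    + simpl in Hi. assert (Hi2 : i < length ch) by (rewrite Hlen; exact Hi). clear Hi. rename Hi2 into Hi.
            rename p' into w. rename H' into H. exists ((s, w) :: H), (isRc r i), (nth i ch dummy).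
      split. { rewrite sub_app, Hs. apply nth_error_nth'. exact Hi. }
      split. { apply Hch. exact Hi. }
      split.
      { intros s' q' [E|Hin].
        - injection E as E1 E2. subst s' q'. split; [exists [i]; reflexivity|].
          split; [rewrite length_app; simpl; lia| unfold tlab; rewrite Hs; reflexivity].
        - destruct (Hh _ _ Hin) as ([x Ex] & Hlq & Hlab).
          split; [exists (x ++ [i]); rewrite Ex, <- app_assoc; reflexivity|].
          split; [rewrite length_app; simpl; lia| exact Hlab]. }
      { intros Hr. destruct r; simpl in Hr; try discriminate.
        destruct i as [|[|i]]; simpl in Hr; try discriminate.
        exists w. split; [reflexivity| simpl; unfold trl; rewrite Hs; reflexivity]. }
Qed.

Lemma rule_inst_ext r c p p' : rule_inst r c p -> (forall i, p i = p' i) -> rule_inst r c p'.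
Proof.
  intros H E. destruct r; simpl in *;
  [rewrite <- (E 0), <- (E 1) | rewrite <- (E 0) | rewrite <- (E 0) | rewrite <- (E 0), <- (E 1)]; exact H.
Qed.

Lemma ok_cyclic T0 s : ok [] [] false T0 -> flab T0 = s -> has_cyclic_proof s.
Proof.
  intros Hok0 Hl. exists (tree_of T0), (d_of T0). split; [|split; [|split]].
  - simpl. unfold tlab. simpl. destruct T0 as [s0 r ch q]. simpl in Hl. subst. split; apply Permutation_refl.
  - destruct (ok_depth _ _ _ _ Hok0) as [N HN]. exists N. intros w Hn.
    destruct (reach T0 Hok0 w Hn) as (H & b & T & Hs & _). apply HN. rewrite Hs. discriminate.
  - intros w Hn. destruct (reach T0 Hok0 w Hn) as (H & b & T & Hs & Hok & _).
    destruct Hok as [H' p' b' s0 q Hl0 | H' p' b' s0 r ch q Hlen Hri Hch].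
    + unfold rules_ok. simpl. unfold trl. rewrite Hs. exact I.
    + rename p' into w.
      assert (Erl : rl (tree_of T0) w = Some r) by (simpl; unfold trl; rewrite Hs; reflexivity).
      assert (Elab : lab (tree_of T0) w = s0) by (simpl; unfold tlab; rewrite Hs; reflexivity).
      unfold rules_ok. rewrite Erl, Elab. cbv beta iota.
      eapply rule_inst_ext; [exact Hri|]. intros i. simpl. unfold tlab. rewrite sub_app, Hs.
      destruct (nth_error ch i) as [T'|] eqn:E.
      * rewrite (nth_error_nth _ _ dummy E). destruct T'; reflexivity.
      * rewrite nth_overflow; [reflexivity| apply nth_error_None; exact E].
  - intros a Hn Hrl Hni. destruct (reach T0 Hok0 a Hn) as (H & b & T & Hs & Hok & Hh & Hb).
    assert (Elab : lab (tree_of T0) a = flab T) by (simpl; unfold tlab; rewrite Hs; destruct T; reflexivity).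
    destruct Hok as [H' p' b' s0 q Hl0 | H' p' b' s0 r ch q Hlen Hri Hch].
    2:{ simpl in Hrl. unfold trl in Hrl. rewrite Hs in Hrl. discriminate. }
    rename p' into a.
    cbn [flab] in Elab. rewrite Elab in Hni.
    destruct Hl0 as [Hini|[Hbt (s' & Hin & Heq)]]; [contradiction|].
    assert (Ed : d_of T0 a = q) by (unfold d_of; rewrite Hs; reflexivity).
    rewrite Ed. destruct (Hh _ _ Hin) as (Hpre & Hlq & Hlab).
    split; [exact Hpre|]. split.
    + exists a. split; [exact Hpre|]. split; [intros E; rewrite E in Hlq; lia|].
      split; [exists []; rewrite app_nil_r; reflexivity| apply Hb; exact Hbt].
    + rewrite Elab. change (lab (tree_of T0) q) with (tlab T0 q). rewrite Hlab. exact Heq.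
Qed.

Fixpoint subs (f : fml) : list fml :=
  f :: match f with
       | Imp A B => subs A ++ subs B
       | Box A => subs A
       | _ => []
       end.

Lemma subs_self f : In f (subs f).
Proof. destruct f; simpl; left; reflexivity. Qed.

Lemma subs_trans f g : In g (subs f) -> incl (subs g) (subs f).
Proof.
  induction f as [| p | A IHA B IHB | A IHA]; simpl; intros H.
  - destruct H as [<-|[]]. apply incl_refl.
  - destruct H as [<-|[]]. apply incl_refl.
  - destruct H as [<-|H]; [apply incl_refl|]. apply in_app_iff in H as [H|H].
    + intros x Hx. right. apply in_app_iff. left. apply (IHA H x Hx).
    + intros x Hx. right. apply in_app_iff. right. apply (IHB H x Hx).
  - destruct H as [<-|H]; [apply incl_refl|]. intros x Hx. right. apply (IHA H x Hx).
Qed.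

Definition closedU (U : list fml) :=
  (forall A B, In (Imp A B) U -> In A U /\ In B U) /\ (forall A, In (Box A) U -> In A U).

Fixpoint subseqs (l : list fml) : list (list fml) :=
  match l with [] => [[]] | x :: l => map (cons x) (subseqs l) ++ subseqs l end.

Lemma filter_subseqs (f : fml -> bool) l : In (filter f l) (subseqs l).
Proof.
  induction l as [|a l IH]; simpl; [left; reflexivity|].
  destruct (f a); apply in_app_iff; [left; apply in_map; exact IH | right; exact IH].
Qed.

Definition key_dec : forall x y : list fml * fml, {x = y} + {x <> y}.
Proof. decide equality; [apply fml_dec | apply list_eq_dec, fml_dec]. Defined.

Definition allkeys U := list_prod (subseqs U) U.
Definition meas U (KH : list ((list fml * fml) * list nat)) :=
  length (filter (fun k => if in_dec key_dec k (map fst KH) then false else true) (allkeys U)).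
Definition keyP U (G : list fml) :=
  filter (fun B => if in_dec fml_dec (Box B) G then true else false) U.
Definition keyseq (k : list fml * fml) : sequent := (map Box (fst k), [snd k]).

Fixpoint sz f := match f with Bot => 1 | Atom _ => 1 | Imp A B => S (sz A + sz B) | Box A => S (sz A) end.
Fixpoint sumsz l := match l with [] => 0 | f :: l => sz f + sumsz l end.
Lemma sumsz_app l1 l2 : sumsz (l1 ++ l2) = sumsz l1 + sumsz l2.
Proof. induction l1; simpl; lia. Qed.

Definition isImp (f : fml) : Prop := match f with Imp _ _ => True | _ => False end.

Definition INV (G D L Rt Rf : list fml) : Prop :=
  (forall f, In f L -> isImp f \/ In f G) /\
  (forall f, In f Rt -> isImp f \/ In f D \/ exists A, f = Box A /\ In A Rt) /\
  (forall A B, In (Imp A B) L -> In (Imp A B) G \/ In B L \/ In A Rt) /\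
  (forall A B, In (Imp A B) Rt -> In (Imp A B) D \/ (In A L /\ In B Rt)) /\
  (forall B, In B Rf -> In B L).

Lemma in_mid {A} (x y : A) l1 l2 : In y (l1 ++ x :: l2) <-> x = y \/ In y (l1 ++ l2).
Proof. rewrite !in_app_iff; simpl; tauto. Qed.

Lemma INV_start G D : INV G D G D [].
Proof.
  split; [|split; [|split; [|split]]].
  - intros f Hf; right; exact Hf.
  - intros f Hf; right; left; exact Hf.
  - intros A B H; left; exact H.
  - intros A B H; left; exact H.
  - intros B [].
Qed.

Lemma INV_ImpL0 l1 l2 A B D L Rt Rf :
  INV (l1 ++ Imp A B :: l2) D L Rt Rf -> INV (B :: l1 ++ l2) D (B :: L) Rt Rf.
Proof.
  intros (Hb & Hc & Hd & He & Hf). split; [|split; [|split; [|split]]].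
  - intros f [<-|Hf']; [right; left; reflexivity|].
    destruct (Hb f Hf') as [Hi|Hi]; [left; exact Hi|].
    apply in_mid in Hi as [<-|Hi]; [left; exact I | right; right; exact Hi].
  - exact Hc.
  - intros A' B' [E|Hi].
    + left. left. exact E.
    + destruct (Hd A' B' Hi) as [Hg|[Hl|Hr]].
      * apply in_mid in Hg as [E|Hg].
        -- injection E as E1 E2. subst. right; left; left; reflexivity.
        -- left; right; exact Hg.
      * right; left; right; exact Hl.
      * right; right; exact Hr.
  - intros A' B' Hi. destruct (He A' B' Hi) as [H1|[H1 H2]]; [left; exact H1| right; split; [right; exact H1| exact H2]].
  - intros B' HB; right; apply Hf; exact HB.
Qed.

Lemma INV_ImpL1 l1 l2 A B D L Rt Rf :
  INV (l1 ++ Imp A B :: l2) D L Rt Rf -> INV (l1 ++ l2) (A :: D) L (A :: Rt) Rf.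
Proof.
  intros (Hb & Hc & Hd & He & Hf). split; [|split; [|split; [|split]]].
  - intros f Hf'. destruct (Hb f Hf') as [Hi|Hi]; [left; exact Hi|].
    apply in_mid in Hi as [<-|Hi]; [left; exact I | right; exact Hi].
  - intros f [<-|Hf'].
    + right; left; left; reflexivity.
    + destruct (Hc f Hf') as [H1|[H1|(A' & E & H1)]].
      * left; exact H1.
      * right; left; right; exact H1.
      * right; right; exists A'; split; [exact E| right; exact H1].
  - intros A' B' Hi. destruct (Hd A' B' Hi) as [Hg|[Hl|Hr]].
    + apply in_mid in Hg as [E|Hg].
      * injection E as E1 E2. subst. right; right; left; reflexivity.
      * left; exact Hg.
    + right; left; exact Hl.
    + right; right; right; exact Hr.
  - intros A' B' [E|Hi].
    + left; left; exact E.
    + destruct (He A' B' Hi) as [H1|[H1 H2]]; [left; right; exact H1| right; split; [exact H1| right; exact H2]].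
  - exact Hf.
Qed.

Lemma INV_ImpR l1 l2 A B G L Rt Rf :
  INV G (l1 ++ Imp A B :: l2) L Rt Rf -> INV (A :: G) (B :: l1 ++ l2) (A :: L) (B :: Rt) Rf.
Proof.
  intros (Hb & Hc & Hd & He & Hf). split; [|split; [|split; [|split]]].
  - intros f [<-|Hf']; [right; left; reflexivity|].
    destruct (Hb f Hf') as [Hi|Hi]; [left; exact Hi| right; right; exact Hi].
  - intros f [<-|Hf'].
    + right; left; left; reflexivity.
    + destruct (Hc f Hf') as [H1|[H1|(A' & E & H1)]].
      * left; exact H1.
      * apply in_mid in H1 as [<-|H1]; [left; exact I| right; left; right; exact H1].
      * right; right; exists A'; split; [exact E| right; exact H1].
  - intros A' B' [E|Hi].
    + left; left; exact E.
    + destruct (Hd A' B' Hi) as [Hg|[Hl|Hr]].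
      * left; right; exact Hg.
      * right; left; right; exact Hl.
      * right; right; right; exact Hr.
  - intros A' B' [E|Hi].
    + left; left; exact E.
    + destruct (He A' B' Hi) as [H1|[H1 H2]].
      * apply in_mid in H1 as [E|H1].
        -- injection E as E1 E2. subst. right. split; left; reflexivity.
        -- left; right; exact H1.
      * right; split; right; assumption.
  - intros B' HB; right; apply Hf; exact HB.
Qed.

Lemma INV_Refl B G D L Rt Rf : INV G D L Rt Rf -> INV (B :: G) D (B :: L) Rt (B :: Rf).
Proof.
  intros (Hb & Hc & Hd & He & Hf). split; [|split; [|split; [|split]]].
  - intros f [<-|Hf']; [right; left; reflexivity|].
    destruct (Hb f Hf') as [Hi|Hi]; [left; exact Hi| right; right; exact Hi].
  - exact Hc.
  - intros A' B' [E|Hi].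
    + left; left; exact E.
    + destruct (Hd A' B' Hi) as [Hg|[Hl|Hr]].
      * left; right; exact Hg.
      * right; left; right; exact Hl.
      * right; right; exact Hr.
  - intros A' B' Hi. destruct (He A' B' Hi) as [H1|[H1 H2]]; [left; exact H1| right; split; [right; exact H1| exact H2]].
  - intros B' [<-|HB]; [left; reflexivity| right; apply Hf; exact HB].
Qed.

Lemma INV_BoxL l1 l2 A G L Rt Rf :
  INV G (l1 ++ Box A :: l2) L Rt Rf -> INV G (A :: l1 ++ l2) L (A :: Rt) Rf.
Proof.
  intros (Hb & Hc & Hd & He & Hf). split; [|split; [|split; [|split]]].
  - exact Hb.
  - intros f [<-|Hf'].
    + right; left; left; reflexivity.
    + destruct (Hc f Hf') as [H1|[H1|(A' & E & H1)]].
      * left; exact H1.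
      * apply in_mid in H1 as [<-|H1].
        -- right; right; exists A; split; [reflexivity| left; reflexivity].
        -- right; left; right; exact H1.
      * right; right; exists A'; split; [exact E| right; exact H1].
  - intros A' B' Hi. destruct (Hd A' B' Hi) as [Hg|[Hl|Hr]].
    + left; exact Hg.
    + right; left; exact Hl.
    + right; right; right; exact Hr.
  - intros A' B' [E|Hi].
    + left; left; exact E.
    + destruct (He A' B' Hi) as [H1|[H1 H2]].
      * apply in_mid in H1 as [E|H1]; [discriminate E| left; right; exact H1].
      * right; split; [exact H1| right; exact H2].
  - exact Hf.
Qed.

Lemma valid_wL B L Rt : valid (L, Rt) -> valid (B :: L, Rt).
Proof. intros Hv M x [H1 H2]. apply (Hv M x). split; [intros f Hf; apply H1; right; exact Hf| exact H2]. Qed.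
Lemma valid_wR A L Rt : valid (L, Rt) -> valid (L, A :: Rt).
Proof. intros Hv M x [H1 H2]. apply (Hv M x). split; [exact H1| intros f Hf; apply H2; right; exact Hf]. Qed.

Lemma trivM_wf : well_founded (fun y x : list nat => x = y /\ x <> y).
Proof. intros x; constructor; intros y [E Hne]; contradiction. Qed.

Definition trivM : model :=
  {| mR := fun x y => x = y; mV := fun _ _ => False;
     mrefl := fun x => eq_refl; mtrans := fun x y z H1 H2 => eq_trans H1 H2;
     mwf := trivM_wf |}.

Lemma fin_choice (Q : fml -> model -> list nat -> Prop) (l : list fml) :
  (forall a, In a l -> exists M y, Q a M y) ->
  exists f : nat -> model * list nat, forall a, In a l -> exists i, Q a (fst (f i)) (snd (f i)).
Proof.
  induction l as [|a l IH]; intros Hall.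
  - exists (fun _ => (trivM, [])). intros a [].
  - destruct IH as [f Hf]. { intros b Hb; apply Hall; right; exact Hb. }
    destruct (Hall a (or_introl eq_refl)) as (M & y & HQ).
    exists (fun n => match n with 0 => (M, y) | S n => f n end).
    intros b [<-|Hb].
    + exists 0. exact HQ.
    + destruct (Hf b Hb) as [i Hi]. exists (S i). exact Hi.
Qed.

Definition uR (f : nat -> model * list nat) (gd : nat -> Prop) (x y : list nat) : Prop :=
  match x, y with
  | [], [] => True
  | [], i :: w => gd i /\ mR (fst (f i)) (snd (f i)) w
  | _ :: _, [] => False
  | i :: w, j :: v => i = j /\ mR (fst (f i)) w v
  end.

Definition uV (f : nat -> model * list nat) (L : list fml) (x : list nat) (p : nat) : Prop :=
  match x with [] => In (Atom p) L | i :: w => mV (fst (f i)) w p end.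

Lemma uR_refl f gd x : uR f gd x x.
Proof. destruct x; simpl; [exact I| split; [reflexivity| apply mrefl]]. Qed.

Lemma uR_trans f gd x y z : uR f gd x y -> uR f gd y z -> uR f gd x z.
Proof.
  destruct x as [|i w], y as [|j v], z as [|k u]; simpl; try tauto.
  - intros [Hg Hr] [<- Hr2]. split; [exact Hg| eapply mtrans; eauto].
  - intros [<- Hr] [<- Hr2]. split; [reflexivity| eapply mtrans; eauto].
Qed.

Lemma uR_acc_i f gd i w : Acc (fun y x => mR (fst (f i)) x y /\ x <> y) w ->
  Acc (fun y x => uR f gd x y /\ x <> y) (i :: w).
Proof.
  induction 1 as [w _ IH]. constructor. intros [|j v] [Hr Hne]; simpl in Hr; [contradiction|].
  destruct Hr as [<- Hr]. apply IH. split; [exact Hr| intros E; apply Hne; rewrite E; reflexivity].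
Qed.

Lemma uR_wf f gd : well_founded (fun y x => uR f gd x y /\ x <> y).
Proof.
  intros [|i w].
  - constructor. intros [|j v] [Hr Hne]; [contradiction Hne; reflexivity|]. apply uR_acc_i, mwf.
  - apply uR_acc_i, mwf.
Qed.

Definition umodel f gd L : model :=
  {| mR := uR f gd; mV := uV f L; mrefl := uR_refl f gd; mtrans := uR_trans f gd; mwf := uR_wf f gd |}.

Lemma forces_lift f gd L i w φ : forces (umodel f gd L) (i :: w) φ <-> forces (fst (f i)) w φ.
Proof.
  revert w. induction φ as [| p | A IHA B IHB | A IHA]; intros w; simpl.
  - tauto.
  - tauto.
  - split; intros H1 H2; apply IHB, H1, IHA, H2.
  - split.
    + intros Hf v Hr. apply IHA. apply Hf. simpl. split; [reflexivity | exact Hr].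
    + intros Hf [|j v] Hr; simpl in Hr; [contradiction|]. destruct Hr as [<- Hr]. apply IHA, Hf, Hr.
Qed.

Lemma saturated_refuted U G D L Rt Rf :
  closedU U -> incl G U -> INV G D L Rt Rf ->
  ~ (exists A B, In (Imp A B) G) -> ~ (exists A B, In (Imp A B) D) ->
  ~ (exists B, In (Box B) G /\ ~ In B Rf) -> ~ initial (G, D) ->
  ~ (exists A, In (Box A) D /\ valid (map Box (keyP U G), [A])) ->
  ~ valid (L, Rt).
Proof.
  intros [HUi HUb] HGU (I1 & I2 & I3 & I4 & I5) HnI HnI2 HnR Hnini Hnv Hv.
  set (P := keyP U G) in *.
  destruct (fin_choice (fun a M y => forall A, a = Box A -> refutes M y (map Box P, [A])) D) as [f Hfch].
  { intros a Ha. destruct a as [| | |A].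
    1-3: exists trivM, []; intros A' E; discriminate E.
    assert (Hnv' : ~ valid (map Box P, [A])) by (intros Hva; apply Hnv; exists A; split; assumption).
    unfold valid in Hnv'. apply not_all_ex_not in Hnv' as [M HM].
    apply not_all_ex_not in HM as [y Hy]. apply NNPP in Hy.
    exists M, y. intros A' E. injection E as <-. exact Hy. }
  set (gd := fun i => forall B, In B P -> forces (fst (f i)) (snd (f i)) (Box B)).
  set (Mu := umodel f gd L).
  assert (Htruth : forall φ, (In φ L -> forces Mu [] φ) /\ (In φ Rt -> ~ forces Mu [] φ)).
  { induction φ as [| p | A IHA B IHB | A IHA]; split; intros Hin.
    - exfalso. destruct (I1 _ Hin) as [[]|Hg]. apply Hnini. right. exact Hg.
    - simpl. tauto.
    - simpl. exact Hin.
    - simpl. intros Hp. apply Hnini. left. exists p. split.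
      + destruct (I1 _ Hp) as [[]|Hg]; exact Hg.
      + destruct (I2 _ Hin) as [[]|[Hd|[A [E _]]]]; [exact Hd| discriminate E].
    - simpl. destruct (I3 A B Hin) as [Hg|[Hl|Hr]].
      + exfalso. apply HnI. eauto.
      + intros _. apply IHB. exact Hl.
      + intros Ha. exfalso. apply (proj2 IHA Hr Ha).
    - simpl. destruct (I4 A B Hin) as [Hd'|[Hl Hr]].
      + exfalso; apply HnI2; eauto.
      + intros Himp. apply (proj2 IHB Hr). apply Himp. apply (proj1 IHA Hl).
    - destruct (I1 _ Hin) as [[]|Hg].
      simpl. intros [|i w] Hr.
      + apply (proj1 IHA). apply I5. apply NNPP. intros Hn. apply HnR. eauto.
      + simpl in Hr. destruct Hr as [Hgd Hr]. apply forces_lift.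
        assert (HP : In A P).
        { unfold P, keyP. apply filter_In. split; [apply (HUb A), HGU, Hg|].
          destruct (in_dec fml_dec (Box A) G); [reflexivity| contradiction]. }
        exact (Hgd A HP w Hr).
    - simpl. intros Hbox. destruct (I2 _ Hin) as [[]|[HD|[A' [E HA']]]].
      + destruct (Hfch _ HD) as [i Hi]. specialize (Hi A eq_refl). destruct Hi as [Hl Hr].
        apply (Hr A (or_introl eq_refl)). apply (forces_lift f gd L i).
        apply Hbox. simpl. split; [|apply mrefl].
        intros B HB. apply Hl. simpl. apply in_map, HB.
      + injection E as <-. apply (proj2 IHA HA'). apply Hbox. simpl. exact I. }
  apply (Hv Mu []). split; intros φ Hφ; [apply (proj1 (Htruth φ)) | apply (proj2 (Htruth φ))]; exact Hφ.
Qed.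

Lemma in_mid_r {A} (x y : A) l1 l2 : In y (l1 ++ l2) -> In y (l1 ++ x :: l2).
Proof. intros H. apply in_mid. right. exact H. Qed.

Lemma perm_split (l G : list fml) : NoDup l -> incl l G -> exists R, Permutation G (R ++ l).
Proof.
  revert G. induction l as [|a l IH]; intros G Hnd Hinc.
  - exists G. rewrite app_nil_r. apply Permutation_refl.
  - inversion Hnd as [|? ? Hna Hnd']; subst.
    assert (Ha : In a G) by (apply Hinc; left; reflexivity).
    apply in_split in Ha as (g1 & g2 & ->).
    destruct (IH (g1 ++ g2) Hnd') as [R HR].
    { intros y Hy. assert (Hy' : In y (g1 ++ a :: g2)) by (apply Hinc; right; exact Hy).
      apply in_mid in Hy' as [E|Hy']; [subst; contradiction| exact Hy']. }
    exists R. eapply Permutation_trans; [apply Permutation_sym, Permutation_middle|].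
    eapply Permutation_trans; [apply perm_skip, HR|]. apply Permutation_middle.
Qed.

Lemma NoDup_map_Box l : NoDup l -> NoDup (map Box l).
Proof.
  induction 1; simpl; constructor; auto.
  intros Hin. apply in_map_iff in Hin as (y & E & Hy). injection E as ->. contradiction.
Qed.

Lemma filter_len_le {A} (f g : A -> bool) l :
  (forall y, f y = true -> g y = true) -> length (filter f l) <= length (filter g l).
Proof.
  intros Hfg. induction l as [|a l IH]; simpl; [lia|].
  destruct (f a) eqn:Ef; [rewrite (Hfg a Ef); simpl; lia|]. destruct (g a); simpl; lia.
Qed.

Lemma filter_len_lt {A} (f g : A -> bool) l x :
  (forall y, f y = true -> g y = true) -> In x l -> g x = true -> f x = false ->
  length (filter f l) < length (filter g l).
Proof.
  intros Hfg. induction l as [|a l IH]; intros Hin Hg Hf; [destruct Hin|].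
  pose proof (filter_len_le f g l Hfg) as Hle.
  simpl. destruct Hin as [<-|Hin].
  - rewrite Hg, Hf. simpl. lia.
  - specialize (IH Hin Hg Hf).
    destruct (f a) eqn:Ef; [rewrite (Hfg a Ef); simpl; lia|]. destruct (g a); simpl; lia.
Qed.

Lemma meas_cons U KH k q : In k (allkeys U) -> ~ In k (map fst KH) -> meas U ((k, q) :: KH) < meas U KH.
Proof.
  intros Hk Hn. unfold meas. apply filter_len_lt with (x := k); auto.
  - intros y. cbn [map fst]. destruct (in_dec key_dec y (k :: map fst KH)) as [|Hy]; [intros E; discriminate E|].
    intros _. destruct (in_dec key_dec y (map fst KH)) as [Hy'|]; [exfalso; apply Hy; right; exact Hy'| reflexivity].
  - destruct (in_dec key_dec k (map fst KH)); [contradiction|reflexivity].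
  - cbn [map fst]. destruct (in_dec key_dec k (k :: map fst KH)) as [|Hk']; [reflexivity| exfalso; apply Hk'; left; reflexivity].
Qed.

Definition KHinv (KH : list ((list fml * fml) * list nat)) (H : list (sequent * list nat)) (p : list nat) (s : sequent) :=
  forall k q, In (k, q) KH -> In (keyseq k, q) H \/ (q = p /\ keyseq k = s).

Lemma KHinv_child KH H p s p' s' : KHinv KH H p s -> KHinv KH ((s, p) :: H) p' s'.
Proof.
  intros Hk k q Hin. left. destruct (Hk k q Hin) as [Hi|[E1 E2]]; [right; exact Hi| left; rewrite E1, E2; reflexivity].
Qed.

Lemma search U (HU : closedU U) (HUnd : NoDup U) : forall h KH H p b G D L Rt Rf,
  meas U KH = h -> KHinv KH H p (G, D) ->
  incl G U -> incl D U -> NoDup Rf -> incl Rf U ->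
  valid (L, Rt) -> INV G D L Rt Rf ->
  exists T, ok H p b T /\ flab T = (G, D).
Proof.
  intros h. induction h as [h IHh] using lt_wf_ind.
  assert (Main : forall k1 k2 KH H p b G D L Rt Rf,
    length U - length Rf = k1 -> sumsz (G ++ D) = k2 ->
    meas U KH = h -> KHinv KH H p (G, D) ->
    incl G U -> incl D U -> NoDup Rf -> incl Rf U ->
    valid (L, Rt) -> INV G D L Rt Rf ->
    exists T, ok H p b T /\ flab T = (G, D)).
  2:{ intros. eapply Main; eauto. }
  intros k1. induction k1 as [k1 IH1] using lt_wf_ind.
  intros k2. induction k2 as [k2 IH2] using lt_wf_ind.
  intros KH H p b G D L Rt Rf Ek1 Ek2 Hm Hkh HG HD HRf HRfU Hv Hinv.
  pose proof HU as [HUi HUb].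
  destruct (classic (exists A B, In (Imp A B) G)) as [(A & B & HI)|HnI].
  {
    apply in_split in HI as (l1 & l2 & ->).
    assert (HAU : In A U) by (apply (proj1 (HUi A B (HG _ (in_elt _ _ _))))).
    assert (HBU : In B U) by (apply (proj2 (HUi A B (HG _ (in_elt _ _ _))))).
    assert (Hlt0 : sumsz ((B :: l1 ++ l2) ++ D) < k2)
      by (subst k2; rewrite ?sumsz_app; simpl; rewrite ?sumsz_app; simpl; rewrite ?sumsz_app; lia).
    assert (Hlt1 : sumsz ((l1 ++ l2) ++ A :: D) < k2)
      by (subst k2; rewrite ?sumsz_app; simpl; rewrite ?sumsz_app; simpl; rewrite ?sumsz_app; lia).
    assert (X0 : exists T, ok (((l1 ++ Imp A B :: l2, D), p) :: H) (p ++ [0]) false T /\ flab T = (B :: l1 ++ l2, D)).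
    { apply (IH2 _ Hlt0 KH _ _ false _ _ (B :: L) Rt Rf Ek1 eq_refl Hm).
      - apply KHinv_child; exact Hkh.
      - intros f [<-|Hf]; [exact HBU| apply HG, in_mid_r; exact Hf].
      - exact HD.
      - exact HRf.
      - exact HRfU.
      - apply valid_wL; exact Hv.
      - exact (INV_ImpL0 l1 l2 A B _ _ _ _ Hinv). }
    assert (X1 : exists T, ok (((l1 ++ Imp A B :: l2, D), p) :: H) (p ++ [1]) false T /\ flab T = (l1 ++ l2, A :: D)).
    { apply (IH2 _ Hlt1 KH _ _ false _ _ L (A :: Rt) Rf Ek1 eq_refl Hm).
      - apply KHinv_child; exact Hkh.
      - intros f Hf; apply HG, in_mid_r; exact Hf.
      - intros f [<-|Hf]; [exact HAU| apply HD; exact Hf].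
      - exact HRf.
      - exact HRfU.
      - apply valid_wR; exact Hv.
      - exact (INV_ImpL1 l1 l2 A B _ _ _ _ Hinv). }
    destruct X0 as (T0 & Hok0 & Hl0). destruct X1 as (T1 & Hok1 & Hl1).
    exists (FT (l1 ++ Imp A B :: l2, D) (Some ImpL) [T0; T1] []). split; [|reflexivity].
    apply ok_node; [reflexivity| |].
    + simpl. rewrite Hl0, Hl1. exists (l1 ++ l2), D, A, B.
      split; [split; [apply Permutation_sym, Permutation_middle| apply Permutation_refl]|].
      split; split; apply Permutation_refl.
    + intros i Hi. simpl in Hi. destruct i as [|[|i]]; [exact Hok0| exact Hok1| lia]. }
  destruct (classic (exists A B, In (Imp A B) D)) as [(A & B & HI)|HnI2].
  {
    apply in_split in HI as (l1 & l2 & ->).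
    assert (HAU : In A U) by (apply (proj1 (HUi A B (HD _ (in_elt _ _ _))))).
    assert (HBU : In B U) by (apply (proj2 (HUi A B (HD _ (in_elt _ _ _))))).
    assert (Hlt0 : sumsz ((A :: G) ++ B :: l1 ++ l2) < k2)
      by (subst k2; rewrite ?sumsz_app; simpl; rewrite ?sumsz_app; simpl; rewrite ?sumsz_app; lia).
    assert (X0 : exists T, ok (((G, l1 ++ Imp A B :: l2), p) :: H) (p ++ [0]) false T /\ flab T = (A :: G, B :: l1 ++ l2)).
    { apply (IH2 _ Hlt0 KH _ _ false _ _ (A :: L) (B :: Rt) Rf Ek1 eq_refl Hm).
      - apply KHinv_child; exact Hkh.
      - intros f [<-|Hf]; [exact HAU| apply HG; exact Hf].
      - intros f [<-|Hf]; [exact HBU| apply HD, in_mid_r; exact Hf].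
      - exact HRf.
      - exact HRfU.
      - apply valid_wL, valid_wR; exact Hv.
      - apply INV_ImpR; exact Hinv. }
    destruct X0 as (T0 & Hok0 & Hl0).
    exists (FT (G, l1 ++ Imp A B :: l2) (Some ImpR) [T0] []). split; [|reflexivity].
    apply ok_node; [reflexivity| |].
    + simpl. rewrite Hl0. exists G, (l1 ++ l2), A, B.
      split; [split; [apply Permutation_refl| apply Permutation_sym, Permutation_middle]|].
      split; apply Permutation_refl.
    + intros i Hi. simpl in Hi. destruct i as [|i]; [exact Hok0| lia]. }
  destruct (classic (exists B, In (Box B) G /\ ~ In B Rf)) as [(B & HB & HBn)|HnR].
  {
    assert (HBU : In B U) by (apply HUb, HG, HB).
    assert (Hle : length (B :: Rf) <= length U).
    { apply NoDup_incl_length; [constructor; assumption|]. intros f [<-|Hf]; [exact HBU| apply HRfU; exact Hf]. }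
    assert (Hlt : length U - length (B :: Rf) < k1) by (simpl in Hle |- *; lia).
    assert (X0 : exists T, ok (((G, D), p) :: H) (p ++ [0]) false T /\ flab T = (B :: G, D)).
    { apply (IH1 _ Hlt _ KH _ _ false _ _ (B :: L) Rt (B :: Rf) eq_refl eq_refl Hm).
      - apply KHinv_child; exact Hkh.
      - intros f [<-|Hf]; [exact HBU| apply HG; exact Hf].
      - exact HD.
      - constructor; assumption.
      - intros f [<-|Hf]; [exact HBU| apply HRfU; exact Hf].
      - apply valid_wL; exact Hv.
      - apply INV_Refl; exact Hinv. }
    destruct X0 as (T0 & Hok0 & Hl0).
    exists (FT (G, D) (Some Refl) [T0] []). split; [|reflexivity].
    apply in_split in HB as (g1 & g2 & EG).
    apply ok_node; [reflexivity| |].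
    + simpl. rewrite Hl0. exists (g1 ++ g2), D, B. rewrite EG.
      split; [split; [apply Permutation_sym, Permutation_middle| apply Permutation_refl]|].
      split; [apply perm_skip, Permutation_sym, Permutation_middle| apply Permutation_refl].
    + intros i Hi. simpl in Hi. destruct i as [|i]; [exact Hok0| lia]. }
  destruct (classic (initial (G, D))) as [Hini|Hnini].
  { exists (FT (G, D) None [] []). split; [apply ok_leaf; left; exact Hini| reflexivity]. }
  destruct (classic (exists A, In (Box A) D /\ valid (map Box (keyP U G), [A]))) as [(A & HA & Hva)|Hnv].
  2:{ exfalso. exact (saturated_refuted U G D L Rt Rf HU HG Hinv HnI HnI2 HnR Hnini Hnv Hv). }
  set (P := keyP U G) in *.
  assert (HPnd : NoDup (map Box P)) by (apply NoDup_map_Box, NoDup_filter, HUnd).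
  assert (HPinc : incl (map Box P) G).
  { intros f Hf. apply in_map_iff in Hf as (C & <- & HC). unfold P, keyP in HC. apply filter_In in HC as [_ HC].
    destruct (in_dec fml_dec (Box C) G) as [Hi|Hi]; [exact Hi | discriminate]. }
  destruct (perm_split _ _ HPnd HPinc) as [Grest HGrest].
  assert (HAU : In A U) by (apply (HUb A), HD, HA).
  apply in_split in HA as (l1 & l2 & ->).
  assert (Hlt0 : sumsz (G ++ A :: l1 ++ l2) < k2)
    by (subst k2; rewrite ?sumsz_app; simpl; rewrite ?sumsz_app; simpl; rewrite ?sumsz_app; lia).
  assert (X0 : exists T, ok (((G, l1 ++ Box A :: l2), p) :: H) (p ++ [0]) false T /\ flab T = (G, A :: l1 ++ l2)).
  { apply (IH2 _ Hlt0 KH _ _ false _ _ L (A :: Rt) Rf Ek1 eq_refl Hm).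
    - apply KHinv_child; exact Hkh.
    - exact HG.
    - intros f [<-|Hf]; [exact HAU| apply HD, in_mid_r; exact Hf].
    - exact HRf.
    - exact HRfU.
    - apply valid_wR; exact Hv.
    - apply INV_BoxL; exact Hinv. }
  assert (Xr : exists Tr, ok (((G, l1 ++ Box A :: l2), p) :: H) (p ++ [1]) true Tr /\ flab Tr = (map Box P, [A])).
  { destruct (in_dec key_dec (P, A) (map fst KH)) as [Hin|Hnin].
    - apply in_map_iff in Hin as ([k q] & Ek & Hkq). simpl in Ek. subst k.
      exists (FT (map Box P, [A]) None [] q). split; [|reflexivity].
      apply ok_leaf. right. split; [reflexivity|]. exists (map Box P, [A]). split; [|split; apply Permutation_refl].
      destruct (Hkh _ _ Hkq) as [Hi|[Eq E]].
      + right. exact Hi.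
      + left. rewrite Eq, <- E. reflexivity.
    - assert (Hkey : In (P, A) (allkeys U)) by (apply in_prod; [apply filter_subseqs| exact HAU]).
      assert (Hlt : meas U (((P, A), p ++ [1]) :: KH) < h) by (rewrite <- Hm; apply meas_cons; assumption).
      apply (IHh _ Hlt (((P, A), p ++ [1]) :: KH) _ _ true (map Box P) [A] (map Box P) [A] [] eq_refl).
      + intros k q [E|Hkq].
        * injection E as E1 E2. subst k q. right. split; reflexivity.
        * left. destruct (Hkh _ _ Hkq) as [Hi|[Eq E]]; [right; exact Hi| left; rewrite Eq, <- E; reflexivity].
      + intros f Hf. apply HG, HPinc, Hf.
      + intros f [<-|[]]; exact HAU.
      + constructor.
      + intros f [].
      + exact Hva.
      + apply INV_start. }
  destruct X0 as (T0 & Hok0 & Hl0). destruct Xr as (Tr & Hokr & Hlr).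
  exists (FT (G, l1 ++ Box A :: l2) (Some BoxR) [T0; Tr] []). split; [|reflexivity].
  apply ok_node; [reflexivity| |].
  - simpl. rewrite Hl0, Hlr. exists Grest, (l1 ++ l2), P, A.
    split; [split; [exact HGrest| apply Permutation_sym, Permutation_middle]|].
    split; split; [exact HGrest| apply Permutation_refl | apply Permutation_refl | apply Permutation_refl].
  - intros i Hi. simpl in Hi. destruct i as [|[|i]]; [exact Hok0| exact Hokr| lia].
Qed.

Theorem theorem8p5 (G D : list fml) :
  provable (G, D) -> has_cyclic_proof (G, D).
Proof.
  intros [t Ht].
  pose proof (sound t _ Ht) as Hv.
  set (U := nodup fml_dec (flat_map subs (G ++ D))).
  assert (HUin : forall f g, In f (G ++ D) -> In g (subs f) -> In g U).
  { intros f g Hf Hg. unfold U. apply nodup_In. apply in_flat_map. exists f. split; assumption. }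
  assert (HU : closedU U).
  { split.
    - intros A B H. unfold U in H. apply nodup_In, in_flat_map in H as (f & Hf & Hs).
      split; apply (HUin f _ Hf); apply (subs_trans f (Imp A B) Hs); simpl; right; apply in_app_iff;
        [left|right]; apply subs_self.
    - intros A H. unfold U in H. apply nodup_In, in_flat_map in H as (f & Hf & Hs).
      apply (HUin f _ Hf); apply (subs_trans f (Box A) Hs); simpl; right; apply subs_self. }
  assert (X : exists T, ok [] [] false T /\ flab T = (G, D)).
  { apply (search U HU (NoDup_nodup _ _) (meas U []) [] [] [] false G D G D [] eq_refl).
    - intros k q [].
    - intros f Hf. apply (HUin f); [apply in_app_iff; left; exact Hf| apply subs_self].
    - intros f Hf. apply (HUin f); [apply in_app_iff; right; exact Hf| apply subs_self].
    - constructor.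
    - intros f [].
    - exact Hv.
    - apply INV_start. }
  destruct X as (T & Hok & Hl).
  exact (ok_cyclic T _ Hok Hl).
Qed.
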